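(* For $g\geq1$ and $d\geq2$, $\mathcal{S}_g[d]$ is the normal closure in $\mathrm{urSp}(2g)$ of $Y_{1,1}^d$.
   Context: $\mathrm{urSp}(2g)$ is the subgroup of $\mathrm{Sp}(2g,\mathbb{Z})$ (defined via $J=\begin{pmatrix}0&I_g\\-I_g&0\end{pmatrix}$) consisting of matrices $\begin{pmatrix}A&B\\0&{}^tA^{-1}\end{pmatrix}$ with $A\in\mathrm{GL}(g,\mathbb{Z})$ and $A^{-1}B$ symmetric. $\mathcal{S}_g=\left\{\begin{pmatrix}I_g&B\\0&I_g\end{pmatrix} : B\text{ integral symmetric}\right\}$, and $\mathcal{S}_g[d]$ is the kernel of the restriction to $\mathcal{S}_g$ of the reduction map $\mathrm{Sp}(2g,\mathbb{Z})\to\mathrm{Sp}(2g,\mathbb{Z}/d\mathbb{Z})$ (i.e. those with $B\equiv0\bmod d$). $Y_{1,1}=\begin{pmatrix}I_g&S_{1,1}\\0&I_g\end{pmatrix}$ where $S_{1,1}$ is the $g\times g$ matrix with $(1,1)$-entry $1$ and other entries $0$. *)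

(* Defs.v *)
From HB Require Import structures.
From mathcomp Require Import all_boot all_order all_algebra.
Set Implicit Arguments. Unset Strict Implicit. Unset Printing Implicit Defensive.
Import GRing.Theory Num.Theory.
Local Open Scope ring_scope.

Definition Jmx (g : nat) : 'M[int]_(g + g) := block_mx 0 1%:M (- 1%:M) 0.

Definition Sp (g : nat) (M : 'M[int]_(g + g)) : Prop :=
  M^T *m Jmx g *m M = Jmx g.

Definition urSp (g : nat) (M : 'M[int]_(g + g)) : Prop :=
  Sp M /\
  exists (A B : 'M[int]_g),
    [/\ A \in unitmx, (invmx A *m B)^T = invmx A *m B &
        M = block_mx A B 0 (invmx A)^T].

Definition Sg (g : nat) (M : 'M[int]_(g + g)) : Prop :=
  exists B : 'M[int]_g, B^T = B /\ M = block_mx 1%:M B 0 1%:M.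

(* S_g[d]: kernel of the reduction mod d restricted to S_g,
   i.e. M in S_g with M = I entrywise mod d. *)
Definition Sgd (g d : nat) (M : 'M[int]_(g + g)) : Prop :=
  Sg M /\ forall i j, (d%:Z %| (M - 1%:M) i j)%Z.

(* S_{1,1}: (1,1) entry 1, all others 0 (indices are 0-based here) *)
Definition S11 (g : nat) : 'M[int]_g :=
  \matrix_(i, j) ((nat_of_ord i == 0%N) && (nat_of_ord j == 0%N))%:R.

Definition Y11 (g : nat) : 'M[int]_(g + g) := block_mx 1%:M (S11 g) 0 1%:M.

Definition mxpow (n : nat) (M : 'M[int]_n) (k : nat) : 'M[int]_n :=
  iter k (mulmx M) 1%:M.

Inductive nclosure (n : nat) (G : 'M[int]_n -> Prop) (s : 'M[int]_n)
  : 'M[int]_n -> Prop :=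
| ncl_conj : forall h, G h -> nclosure G s (h *m s *m invmx h)
| ncl_one : nclosure G s 1%:M
| ncl_mul : forall a b, nclosure G s a -> nclosure G s b -> nclosure G s (a *m b)
| ncl_inv : forall a, nclosure G s a -> nclosure G s (invmx a).

(* Main.v *)
Require Import Defs.
From HB Require Import structures.
From mathcomp Require Import all_boot all_order all_algebra.
Set Implicit Arguments. Unset Strict Implicit. Unset Printing Implicit Defensive.
Import GRing.Theory Num.Theory.
Local Open Scope ring_scope.

Lemma invmx_eq n (A B : 'M[int]_n) : A *m B = 1%:M -> invmx A = B.
Proof.
move=> AB; have [uA _] := mulmx1_unit AB.
by rewrite -[invmx A]mulmx1 -AB mulmxA mulVmx // mul1mx.
Qed.

Definition T g (X : 'M[int]_g) : 'M[int]_(g + g) := block_mx 1%:M X 0 1%:M.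

Lemma TM g (X Y : 'M[int]_g) : T X *m T Y = T (X + Y).
Proof.
by rewrite /T mulmx_block !mul1mx !mul0mx !mulmx0 !mulmx1 !addr0 add0r addrC.
Qed.

Lemma T0 g : T (0 : 'M[int]_g) = 1%:M.
Proof. by rewrite /T -scalar_mx_block. Qed.

Lemma TV g (X : 'M[int]_g) : invmx (T X) = T (- X).
Proof. by apply: invmx_eq; rewrite TM subrr T0. Qed.

Definition H g (A B : 'M[int]_g) : 'M[int]_(g + g) := block_mx A B 0 (invmx A)^T.

Lemma conjT0 g (A Ai B X : 'M[int]_g) : A *m Ai = 1%:M -> Ai *m A = 1%:M ->
  block_mx A B 0 Ai^T *m T X *m block_mx Ai (- (Ai *m B *m A^T)) 0 A^T
  = T (A *m X *m A^T).
Proof.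
move=> h1 h2; rewrite /T !mulmx_block ?mul0mx ?mulmx0 ?mulmx1 ?mul1mx ?addr0 ?add0r.
rewrite ?mul0mx ?mulmx0 ?addr0 ?add0r h1 -trmx_mul h1 trmx1.
congr block_mx.
have e : A *m (Ai *m B *m A^T) = B *m A^T by rewrite !mulmxA h1 mul1mx.
by rewrite mulmxN e mulmxDl addrC -addrA addrN addr0.

Qed.

Lemma HV0 g (A Ai B : 'M[int]_g) : A *m Ai = 1%:M -> Ai *m A = 1%:M ->
  block_mx A B 0 Ai^T *m block_mx Ai (- (Ai *m B *m A^T)) 0 A^T = 1%:M.
Proof.
move=> h1 h2.
rewrite mulmx_block ?mul0mx ?mulmx0 ?addr0 ?add0r h1.
rewrite -trmx_mul h1 trmx1 mulmxN !mulmxA h1 mul1mx.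
by rewrite addNr -scalar_mx_block.
Qed.

Lemma conjT g (A B X : 'M[int]_g) : A \in unitmx ->
  H A B *m T X *m invmx (H A B) = T (A *m X *m A^T).
Proof.
move=> uA.
have h1 : A *m invmx A = 1%:M by apply: mulmxV.
have h2 : invmx A *m A = 1%:M by apply: mulVmx.
rewrite (invmx_eq (HV0 B h1 h2)).
exact: conjT0.
Qed.

Lemma Sp0 g (A Ai : 'M[int]_g) : A *m Ai = 1%:M -> Ai *m A = 1%:M ->
  Sp (block_mx A 0 0 Ai^T).
Proof.
move=> h1 h2.
rewrite /Sp /Jmx tr_block_mx ?trmx0 trmxK !mulmx_block.
rewrite ?mul0mx ?mulmx0 ?mulmx1 ?mul1mx ?addr0 ?add0r ?mulmxN ?mulNmx ?mulmx0 ?oppr0 ?addr0 ?add0r.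
congr block_mx.
- exact: mul0mx.
- by rewrite -trmx_mul h2 trmx1.
- by rewrite mulmx1 h2.
- exact: mul0mx.
Qed.

Lemma urSpH g (A : 'M[int]_g) : A \in unitmx -> urSp (H A 0).
Proof.
move=> uA; split; last first.
  by exists A, 0; split => //; rewrite mulmx0 trmx0.
have h1 : A *m invmx A = 1%:M by apply: mulmxV.
have h2 : invmx A *m A = 1%:M by apply: mulVmx.
exact: Sp0.
Qed.

Lemma mxpowY g k : mxpow (Y11 g) k = T ((k%:Z) *: S11 g).
Proof.
elim: k => [|k IH]; first by rewrite /= scale0r T0.
rewrite /= IH /Y11 -/(T (S11 g)) TM.
by rewrite -add1n PoszD scalerDl scale1r.
Qed.

Definition PX g d (X : 'M[int]_g) :=
  nclosure (@urSp g) (mxpow (Y11 g) d) (T (d%:Z *: X)).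

Lemma PX0 g d : PX d (0 : 'M[int]_g).
Proof. by rewrite /PX scaler0 T0; exact: ncl_one. Qed.

Lemma PXD g d (X Y : 'M[int]_g) : PX d X -> PX d Y -> PX d (X + Y).
Proof. by rewrite /PX scalerDr -TM; exact: ncl_mul. Qed.

Lemma PXN g d (X : 'M[int]_g) : PX d X -> PX d (- X).
Proof. by rewrite /PX scalerN -TV; exact: ncl_inv. Qed.

Lemma PXZ g d (X : 'M[int]_g) z : PX d X -> PX d (z *: X).
Proof.
move=> hX.
have hn n : PX d (n%:Z *: X).
  elim: n => [|n IH]; first by rewrite scale0r; exact: PX0.
  by rewrite -add1n PoszD scalerDl scale1r; exact: PXD.
case: z => n; first exact: hn.
by rewrite NegzE scaleNr; apply: PXN; exact: hn.
Qed.

Lemma PXconj g d (A : 'M[int]_g) : A \in unitmx -> PX d (A *m S11 g *m A^T).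
Proof.
move=> uA; rewrite /PX scalemxAl scalemxAr -(conjT 0 _ uA).
rewrite -mxpowY; apply: ncl_conj; exact: urSpH.
Qed.

Definition ev n (i : 'I_n) : 'cV[int]_n := delta_mx i (0 : 'I_1).

Lemma evev n (i j : 'I_n) : ev i *m (ev j)^T = delta_mx i j.
Proof. by rewrite /ev trmx_delta mul_delta_mx. Qed.

Lemma S11E g : S11 g.+1 = ev 0 *m (ev 0)^T.
Proof.
rewrite evev; apply/matrixP => i j; rewrite !mxE.
by [].
Qed.

Definition goodv n (v : 'cV[int]_n.+1) := exists A, A \in unitmx /\ v = A *m ev 0.

Lemma goodv_PX g d v : @goodv g v -> PX d (v *m v^T).
Proof.
case=> A [uA ->]; rewrite trmx_mul !mulmxA -[A *m _ *m _]mulmxA -S11E.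
exact: PXconj.
Qed.

Lemma goodv_mul n (B : 'M[int]_n.+1) v : B \in unitmx -> goodv v -> goodv (B *m v).
Proof.
move=> uB [A [uA ->]]; exists (B *m A); split; last by rewrite mulmxA.
by rewrite unitmx_mul uB uA.
Qed.

Definition tv n (k l : 'I_n) (c : int) : 'M[int]_n := 1%:M + c *: delta_mx k l.

Lemma tv_unit n (k l : 'I_n.+1) c : k != l -> tv k l c \in unitmx.
Proof.
move=> kl; suff h : tv k l c *m tv k l (- c) = 1%:M by case: (mulmx1_unit h).
rewrite /tv mulmxDl !mulmxDr !mul1mx !mulmx1 -!scalemxAl -!scalemxAr.
rewrite mul_delta_mx_0; last by rewrite eq_sym.
by rewrite !scaler0 addr0 scaleNr subrK.
Qed.

Lemma tv_ev n (k l m : 'I_n) c :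
  tv k l c *m ev m = ev m + c *: (ev k *+ (l == m)).
Proof. by rewrite /tv /ev mulmxDl mul1mx -scalemxAl mul_delta_mx_cond. Qed.

Lemma goodv_ev n (i : 'I_n.+1) : goodv (ev i).
Proof.
have g0 : goodv (ev (0 : 'I_n.+1)).
  by exists 1%:M; split; [exact: unitmx1 | rewrite mul1mx].
have [->|i0] := eqVneq i 0; first exact: g0.
have h1 := goodv_mul (tv_unit 1 i0) g0.
rewrite tv_ev eqxx /= scale1r in h1.
have i0' : (0 : 'I_n.+1) != i by rewrite eq_sym.
have h2 := goodv_mul (tv_unit (- 1) i0') h1.
rewrite mulmxDr mulr1n !tv_ev eqxx (negbTE i0) /= mulr0n scaler0 addr0 in h2.
by rewrite scaleN1r mulr1n addrC subrK in h2.
Qed.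

Lemma goodv_ev2 n (i j : 'I_n.+1) : i != j -> goodv (ev i + ev j).
Proof.
move=> ij; have ji : j != i by rewrite eq_sym.
have := goodv_mul (tv_unit 1 ji) (goodv_ev i).
by rewrite tv_ev eqxx mulr1n scale1r.
Qed.

Lemma aux4 (V : zmodType) (a b c e : V) : b + c = a + b + (c + e) - a - e.
Proof. by rewrite [a + b]addrC -!addrA; congr (_ + _); rewrite addrCA [a + _]addrCA addNKr subrr addr0. Qed.

Lemma PX_diag g d (i : 'I_g.+1) : PX d (delta_mx i i).
Proof. by rewrite -evev; apply: goodv_PX; exact: goodv_ev. Qed.

Lemma PX_off g d (i j : 'I_g.+1) : PX d (delta_mx i j + delta_mx j i).
Proof.
have [->|ij] := eqVneq i j; first by apply: PXD; exact: PX_diag.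
have h := goodv_PX d (@goodv_ev2 g i j ij).
rewrite raddfD /= mulmxDl !mulmxDr !evev in h.
have e : (delta_mx i j + delta_mx j i : 'M[int]_g.+1) =
  (delta_mx i i + delta_mx i j + (delta_mx j i + delta_mx j j)) - delta_mx i i - delta_mx j j.
  exact: aux4.
rewrite e; apply: PXD; last by apply: PXN; exact: PX_diag.
apply: PXD; last by apply: PXN; exact: PX_diag.
exact: h.
Qed.




Lemma PX_sum g d (F : 'I_g -> 'I_g -> 'M[int]_g) :
  (forall i j, PX d (F i j)) -> PX d (\sum_i \sum_j F i j).
Proof.
move=> hF; apply: (big_ind (PX d)); [exact: PX0 | exact: PXD | move=> i _].
apply: (big_ind (PX d)); [exact: PX0 | exact: PXD | move=> j _; exact: hF].
Qed.

Lemma PX_sym g d (Y : 'M[int]_g.+1) : PX d (Y + Y^T).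
Proof.
have -> : Y + Y^T = \sum_i \sum_j Y i j *: (delta_mx i j + delta_mx j i).
  rewrite {1}(matrix_sum_delta Y) {1}(matrix_sum_delta Y^T).
  under [X in _ + X]eq_bigr do under eq_bigr do rewrite mxE.
  rewrite [X in _ + X]exchange_big /= -big_split /=.
  by apply: eq_bigr => i _; rewrite -big_split /=; apply: eq_bigr => j _; rewrite scalerDr.
apply: PX_sum => i j; apply: PXZ; exact: PX_off.
Qed.

Lemma PX_diagmx g d (D : 'M[int]_g.+1) : (forall i j, i != j -> D i j = 0) -> PX d D.
Proof.
move=> hD; rewrite (matrix_sum_delta D); apply: PX_sum => i j.
have [<-|ij] := eqVneq i j; first by apply: PXZ; exact: PX_diag.
by rewrite hD // scale0r; exact: PX0.
Qed.

Lemma PX_all g d (X : 'M[int]_g.+1) : X^T = X -> PX d X.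
Proof.
move=> sX.
pose L : 'M[int]_g.+1 := \matrix_(i, j) (if (i < j)%N then X i j else 0).
pose D : 'M[int]_g.+1 := \matrix_(i, j) (if i == j then X i j else 0).
have -> : X = (L + L^T) + D.
  apply/matrixP => i j; rewrite !mxE.
  have xs : X j i = X i j by rewrite -{1}sX mxE.
  case: (ltngtP i j) => h.
  - have -> : (i == j) = false by apply/negbTE; rewrite -val_eqE /= neq_ltn h.
    by rewrite !addr0.
  - have -> : (i == j) = false by apply/negbTE; rewrite -val_eqE /= neq_ltn h orbT.
    by rewrite xs add0r addr0.
  - by rewrite (val_inj h) eqxx !add0r.
apply: PXD; first exact: PX_sym.
by apply: PX_diagmx => i j ij; rewrite mxE (negbTE ij).
Qed.

Lemma Tsub1 g (Y : 'M[int]_g) : T Y - 1%:M = block_mx 0 Y 0 0.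
Proof.
rewrite /T [X in _ - X]scalar_mx_block opp_block_mx add_block_mx.
by rewrite subrr subr0 oppr0 addr0.
Qed.

Lemma S11T g : (S11 g)^T = S11 g.
Proof. by apply/matrixP => i j; rewrite !mxE andbC. Qed.

Definition Inv g d (M : 'M[int]_(g + g)) :=
  exists C : 'M[int]_g, C^T = C /\ M = T (d%:Z *: C).

Lemma Inv_ncl g d M : nclosure (@urSp g) (mxpow (Y11 g) d) M -> Inv d M.
Proof.
elim=> {M}.
- move=> h [_ [A [B [uA _ ->]]]].
  rewrite mxpowY; change (block_mx A B 0 (invmx A)^T) with (H A B).
  rewrite conjT //; exists (A *m S11 g *m A^T); split.
    by rewrite !trmx_mul trmxK S11T mulmxA.
  by rewrite scalemxAl scalemxAr.
- by exists 0; split; [rewrite trmx0 | rewrite scaler0 T0].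
- move=> a b _ [C1 [s1 ->]] _ [C2 [s2 ->]]; exists (C1 + C2); split.
    by rewrite raddfD /= s1 s2.
  by rewrite TM scalerDr.
- move=> a _ [C [s ->]]; exists (- C); split; first by rewrite raddfN /= s.
  by rewrite TV scalerN.
Qed.

Lemma Inv_Sgd g d M : Inv d M -> @Sgd g d M.
Proof.
case=> C [sC ->]; split.
  exists (d%:Z *: C); split => //.
  by apply/matrixP => i j; rewrite !mxE -{1}sC mxE.
move=> i j; rewrite Tsub1.
rewrite -[i]splitK -[j]splitK.
case: (split i) => a; case: (split j) => b /=.
- by rewrite block_mxEul mxE dvdz0.
- by rewrite block_mxEur mxE; exact: dvdz_mulr.
- by rewrite block_mxEdl mxE dvdz0.
- by rewrite block_mxEdr mxE dvdz0.
Qed.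

Theorem corollary3p9 (g d : nat) (hg : (1 <= g)%N) (hd : (2 <= d)%N)
  (M : 'M[int]_(g + g)) :
  Sgd d M <-> nclosure (@urSp g) (mxpow (Y11 g) d) M.
Proof.
split; last by move/Inv_ncl; exact: Inv_Sgd.
case: g hg M => // g _ M.
case=> [[B [sB ->]] hdiv].
have dB i j : (d%:Z %| B i j)%Z.
  by have := hdiv (lshift g.+1 i) (rshift g.+1 j); rewrite -/(T B) Tsub1 block_mxEur.
pose C : 'M[int]_g.+1 := \matrix_(i, j) (B i j %/ d%:Z)%Z.
have -> : B = d%:Z *: C.
  by apply/matrixP => i j; rewrite !mxE mulrC divzK.
apply: PX_all; apply/matrixP => i j; rewrite !mxE.
have e : B j i = B i j by rewrite -{1}sB mxE.
by rewrite e.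
Qed.
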